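(* Let $\mathtt{L}\in\mathcal{L}$ be a line of $\mathbb{S}$ and let $\alpha\in P\cup P'$. If $\alpha$ has distance $3$ (in $\mathbb{S}$) from two points of $\mathtt{L}$, then $\alpha$ has distance $2$ from the third point of $\mathtt{L}$.
   Context: Let $S=(P,L)$ and $S'=(P',L')$ be generalized quadrangles of order $(2,2)$ (every line has 3 points, every point lies on 3 lines, and for each point $x$ and line $l\not\ni x$ exactly one point of $l$ is collinear with $x$), with an isomorphism $x\mapsto x'$ from $S$ to $S'$. In a point-line geometry, $x^{\perp}$ is $x$ together with all points collinear with $x$, and $A^{\perp}=\bigcap_{a\in A}a^{\perp}$. A triad is a set of three pairwise non-collinear points, complete if $|T^{\perp}|=3$. Let $\mathcal{P}=\{(x,y')\in P\times P':y'\in x'^{\perp}\}$ and $\mathcal{L}$ the set of all $3$-subsets $\{(x,u'),(y,v'),(z,w')\}$ of $\mathcal{P}$ where $T=\{x,y,z\}$ (three distinct points) is a line or complete triad of $S$ and $\{u',v',w'\}=T'^{\perp}$ in $S'$ with $u',v',w'$ distinct. The geometry $\mathbb{S}=(\mathbb{P},\mathbb{L})$ has point set $\mathbb{P}=\mathcal{P}\cup P\cup P'$ (disjoint union) and line set $\mathcal{L}\cup\{\{x,(x,u'),u'\}:(x,u')\in\mathcal{P}\}$. Distances are in the collinearity graph of $\mathbb{S}$. *)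

(* Defs.v *)
From mathcomp Require Import all_boot.
Set Implicit Arguments. Unset Strict Implicit. Unset Printing Implicit Defensive.

Section GQ.
Variable P : finType.
Variable L : {set {set P}}.

Definition perp (x : P) : {set P} :=
  x |: [set y | [exists l in L, (x \in l) && (y \in l)]].

Definition perpA (A : {set P}) : {set P} := \bigcap_(a in A) perp a.

Definition collinear (x y : P) : bool := (x != y) && (y \in perp x).

Definition is_GQ22 : Prop :=
  (forall l, l \in L -> #|l| = 3) /\
  (forall x : P, #|[set l in L | x \in l]| = 3) /\
  (forall (x : P) l, l \in L -> x \notin l ->
     #|[set y in l | collinear x y]| = 1).

Definition complete_triad (x y z : P) : bool :=
  [&& x != y, y != z, x != z,
      ~~ collinear x y, ~~ collinear y z, ~~ collinear x z &
      #|perpA [set x; y; z]| == 3].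
End GQ.

Definition is_iso (P P' : finType) (L : {set {set P}}) (L' : {set {set P'}})
  (f : P -> P') : Prop :=
  bijective f /\ forall l : {set P}, (l \in L) = (f @: l \in L').

(* The geometry SS: points are (P * P') + P + P' restricted to the valid ones. *)
Section Big.
Variables P P' : finType.
Variable L : {set {set P}}.
Variable L' : {set {set P'}}.
Variable f : P -> P'.

Definition BPt := ((P * P') + P + P')%type.

Definition pairPt (x : P) (y : P') : BPt := inl (inl (x, y)).
Definition leftPt (x : P) : BPt := inl (inr x).
Definition rightPt (y : P') : BPt := inr y.

Definition inCalP (x : P) (y : P') : bool := y \in perp L' (f x).

Definition calL_line (Ls : {set BPt}) : Prop :=
  exists (x y z : P) (u v w : P'),
    [/\ x != y, y != z & x != z] /\
    ([set x; y; z] \in L \/ complete_triad L x y z) /\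
    [/\ u != v, v != w & u != w] /\
    [set u; v; w] = perpA L' (f @: [set x; y; z]) /\
    [/\ inCalP x u, inCalP y v & inCalP z w] /\
    Ls = [set pairPt x u; pairPt y v; pairPt z w].

Definition short_line (Ls : {set BPt}) : Prop :=
  exists (x : P) (u : P'),
    inCalP x u /\ Ls = [set leftPt x; pairPt x u; rightPt u].

Definition BLine (Ls : {set BPt}) : Prop := calL_line Ls \/ short_line Ls.

Definition Badj (a b : BPt) : Prop :=
  a <> b /\ exists Ls, BLine Ls /\ a \in Ls /\ b \in Ls.

Fixpoint dist_le (n : nat) (a b : BPt) : Prop :=
  match n with
  | 0 => a = b
  | n'.+1 => dist_le n' a b \/ exists c, dist_le n' a c /\ Badj c b
  end.

Definition Bdist (a b : BPt) (n : nat) : Prop :=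
  dist_le n a b /\ forall m, m < n -> ~ dist_le m a b.

Definition inPuP' (a : BPt) : bool :=
  match a with inl (inl _) => false | _ => true end.
End Big.

(* Main.v *)
Require Import Defs.
From mathcomp Require Import all_boot.
Set Implicit Arguments. Unset Strict Implicit. Unset Printing Implicit Defensive.

Lemma card3P (T : finType) (A : {set T}) a : #|A| = 3 -> a \in A ->
  exists b c, [/\ b != a, c != a, b != c & A = [set a; b; c]].
Proof.
move=> h3 aA; have := cardsD1 a A; rewrite h3 aA => /eqP; rewrite eqSS => /eqP h2.
have /cards2P [b [c [bc hD]]] : #|A :\ a| == 2 by rewrite -h2.
exists b, c; split => //.
- have : b \in A :\ a by rewrite hD !inE eqxx.
  by rewrite in_setD1 => /andP[].
- have : c \in A :\ a by rewrite hD !inE eqxx orbT.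
  by rewrite in_setD1 => /andP[].
- by rewrite -(setD1K aA) hD setUA.
Qed.

Lemma card3_set (T : finType) (a b c : T) : a != b -> a != c -> b != c ->
  #|[set a; b; c]| = 3.
Proof.
move=> ab ac bc; rewrite -setUA !cardsU1 cards1 !inE.
by rewrite (negbTE ab) (negbTE ac) (negbTE bc).
Qed.

Lemma set3P (T : finType) (a b c k : T) : k \in [set a; b; c] -> [\/ k = a, k = b | k = c].
Proof. by rewrite !inE => /orP[/orP[]|]/eqP->; [constructor 1|constructor 2|constructor 3]. Qed.

Lemma set3_in (T : finType) (a b c : T) : [/\ a \in [set a; b; c], b \in [set a; b; c] & c \in [set a; b; c]].
Proof. by rewrite !inE !eqxx !orbT. Qed.

Section GQ.
Variable P : finType.
Variable L : {set {set P}}.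
Hypothesis HG : is_GQ22 L.

Local Notation perp := (perp L).

Lemma perpE x y : (y \in perp x) = (y == x) || [exists l in L, (x \in l) && (y \in l)].
Proof. by rewrite /perp !inE. Qed.

Lemma perp_refl x : x \in perp x.
Proof. by rewrite perpE eqxx. Qed.

Lemma perp_sym x y : (y \in perp x) = (x \in perp y).
Proof.
rewrite !perpE eq_sym; congr (_ || _).
by apply/existsP/existsP => -[l /and3P[? ? ?]]; exists l; apply/and3P.
Qed.

Lemma line_perp l x y : l \in L -> x \in l -> y \in l -> y \in perp x.
Proof. by move=> lL xl yl; rewrite perpE; apply/orP; right; apply/existsP; exists l; rewrite lL xl yl. Qed.

Lemma perp_line x y : y \in perp x -> y != x -> exists l, [/\ l \in L, x \in l & y \in l].
Proof.
rewrite perpE => /orP[/eqP-> | ]; first by rewrite eqxx.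
by move=> /existsP[l /and3P[lL xl yl]] _; exists l.
Qed.

Lemma line_card l : l \in L -> #|l| = 3.
Proof. by case: HG => h _; apply: h. Qed.

Lemma gq_card x l : l \in L -> x \notin l -> #|[set y in l | y \in perp x]| = 1.
Proof.
move=> lL xl; case: HG => _ [_ h]; rewrite -(h x l lL xl); apply: eq_card => y.
rewrite !inE /collinear; case yl: (y \in l) => //=.
have -> : x != y by apply/eqP => exy; rewrite exy yl in xl.
by rewrite -perpE.
Qed.

Lemma gq_uniq l x y1 y2 : l \in L -> x \notin l -> y1 \in l -> y2 \in l ->
  y1 \in perp x -> y2 \in perp x -> y1 = y2.
Proof.
move=> lL xl h1 h2 p1 p2; have /eqP/cards1P[e he] := gq_card lL xl.
have : y1 \in [set y in l | y \in perp x] by rewrite inE h1 p1.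
have : y2 \in [set y in l | y \in perp x] by rewrite inE h2 p2.
by rewrite he !inE => /eqP-> /eqP->.
Qed.

Lemma gq_ex l x : l \in L -> x \notin l -> exists2 y, y \in l & y \in perp x.
Proof.
move=> lL xl; have /eqP/cards1P[e he] := gq_card lL xl.
have : e \in [set y in l | y \in perp x] by rewrite he set11.
by rewrite inE => /andP[]; exists e.
Qed.

Lemma line_other l a : l \in L -> a \in l -> exists b c,
  [/\ b != a, c != a, b != c & l = [set a; b; c]].
Proof. by move=> lL al; apply: card3P => //; apply: line_card. Qed.

Lemma lines_eq l1 l2 a b : l1 \in L -> l2 \in L -> a != b ->
  a \in l1 -> b \in l1 -> a \in l2 -> b \in l2 -> l1 = l2.
Proof.
move=> h1 h2 ab a1 b1 a2 b2; apply/eqP; rewrite eq_sym eqEcard (line_card h1) (line_card h2) leqnn andbT.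
apply/negPn/negP => /subsetPn[c c2 c1].
suff : a = b by move/eqP; rewrite (negbTE ab).
by apply: (gq_uniq h1 c1 a1 b1); apply: (line_perp h2).
Qed.

Lemma point_line x : exists l, l \in L /\ x \in l.
Proof.
case: HG => _ [h _]; have : 0 < #|[set l in L | x \in l]| by rewrite h.
by case/card_gt0P => l; rewrite inE => /andP[]; exists l.
Qed.

Lemma three_lines x l1 l2 l3 l : l1 \in L -> l2 \in L -> l3 \in L -> l \in L ->
  x \in l1 -> x \in l2 -> x \in l3 -> x \in l ->
  l1 != l2 -> l1 != l3 -> l2 != l3 -> [\/ l = l1, l = l2 | l = l3].
Proof.
move=> h1 h2 h3 h x1 x2 x3 xl n12 n13 n23.
case: HG => _ [hc _].
have e : [set l1; l2; l3] = [set l in L | x \in l].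
  apply/eqP; rewrite eqEcard hc card3_set // leqnn andbT.
  by apply/subsetP => k; rewrite !inE => /orP[/orP[]|]/eqP->; apply/andP.
have : l \in [set l1; l2; l3] by rewrite e inE h xl.
by rewrite !inE => /orP[/orP[]|]/eqP->; [constructor 1|constructor 2|constructor 3].
Qed.

Lemma lines_two x l1 l2 : l1 \in L -> l2 \in L -> x \in l1 -> x \in l2 -> l1 != l2 ->
  exists l3, [/\ l3 \in L, x \in l3, l3 != l1 & l3 != l2].
Proof.
move=> h1 h2 x1 x2 n12; case: HG => _ [hc _].
have : ~~ ([set l in L | x \in l] \subset [set l1; l2]).
  by apply/negP => /subset_leq_card; rewrite hc cards2 n12.
case/subsetPn => k; rewrite !inE => /andP[kL xk] /norP[k1 k2].
by exists k.
Qed.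

Lemma line_third l a b : l \in L -> a \in l -> b \in l -> a != b ->
  exists c, [/\ c \in l, c != a, c != b &
    forall q, q \in l -> [\/ q = a, q = b | q = c]].
Proof.
move=> lL al bl ab; have [k1 [k2 [k1a k2a k12 le]]] := line_other lL al.
have := bl; rewrite {1}le !inE => /orP[/orP[]|] /eqP eb; subst b.
- by rewrite eqxx in ab.
- exists k2; split => //; [by rewrite le !inE eqxx orbT|by rewrite eq_sym|].
  move=> q; rewrite le !inE => /orP[/orP[]|]/eqP->; [constructor 1|constructor 2|constructor 3]; done.
- exists k1; split => //; first by rewrite le !inE eqxx ?orbT.
  move=> q; rewrite le !inE => /orP[/orP[]|]/eqP->; [constructor 1|constructor 3|constructor 2]; done.
Qed.

Lemma perp_col l e1 e2 q : l \in L -> e1 \in l -> e2 \in l -> e1 != e2 ->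
  q \in perp e1 -> q \in perp e2 -> q \in l.
Proof.
move=> lL h1 h2 e12 q1 q2; apply/negPn/negP => ql.
move/eqP: e12; apply; apply: (gq_uniq lL ql) => //; by rewrite perp_sym.
Qed.

Lemma perpAP (A : {set P}) q : reflect (forall a, a \in A -> q \in perp a) (q \in perpA L A).
Proof. exact: bigcapP. Qed.

Lemma perpA3 a b c q :
  (q \in perpA L [set a; b; c]) = [&& q \in perp a, q \in perp b & q \in perp c].
Proof.
apply/perpAP/and3P.
- by move=> h; case: (set3_in a b c) => i1 i2 i3; split; apply: h.
- by case=> h1 h2 h3 k /set3P[]->.
Qed.

Lemma perpA_line l : l \in L -> perpA L l = l.
Proof.
move=> lL; apply/setP => q; apply/perpAP/idP; last first.
  by move=> ql a al; apply: (line_perp lL).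
move=> h; apply/negPn/negP => ql.
have : 0 < #|l| by rewrite (line_card lL).
case/card_gt0P => a al.
have [k1 [k2 [k1a k2a k12 le]]] := line_other lL al.
have k1l : k1 \in l by rewrite le !inE eqxx ?orbT.
have k2l : k2 \in l by rewrite le !inE eqxx ?orbT.
move/eqP: k12; apply; apply: (gq_uniq lL ql k1l k2l); rewrite perp_sym; exact: h.
Qed.

Lemma three_lines_ex x : exists l1 l2 l3, [/\ l1 \in L, l2 \in L & l3 \in L] /\
  [/\ x \in l1, x \in l2 & x \in l3] /\ [/\ l1 != l2, l1 != l3 & l2 != l3].
Proof.
have [l1 [l1L xl1]] := point_line x.
case: HG => _ [hc _].
have h1 : l1 \in [set l in L | x \in l] by rewrite inE l1L xl1.
have [l2 [l3 [n21 n31 n23 e]]] := card3P (hc x) h1.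
have : l2 \in [set l in L | x \in l] by rewrite e !inE eqxx ?orbT.
have : l3 \in [set l in L | x \in l] by rewrite e !inE eqxx ?orbT.
rewrite !inE => /andP[l3L xl3] /andP[l2L xl2].
exists l1, l2, l3; split => //; split => //; split => //; by rewrite eq_sym.
Qed.

Lemma perp2 x y : y \notin perp x -> exists a b c, [/\ a != b, a != c & b != c] /\
  forall q, (q \in perp x) && (q \in perp y) = (q \in [set a; b; c]).
Proof.
move=> yx.
have [l1 [l2 [l3 [[h1 h2 h3] [[x1 x2 x3] [n12 n13 n23]]]]]] := three_lines_ex x.
have yl : forall l : {set P}, x \in l -> l \in L -> y \notin l.
  by move=> l xl lL; apply: contra yx => yl; apply: (line_perp lL).
have [a al ay] := gq_ex h1 (yl _ x1 h1).
have [b bl by'] := gq_ex h2 (yl _ x2 h2).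
have [c cl cy] := gq_ex h3 (yl _ x3 h3).
have ax : forall k, k \in perp y -> k != x.
  by move=> k ky; apply: contraNneq yx => <-; rewrite perp_sym.
have dif : forall k1 k2 (m1 m2 : {set P}), m1 \in L -> m2 \in L -> x \in m1 -> x \in m2 ->
   k1 \in m1 -> k2 \in m2 -> k1 \in perp y -> m1 != m2 -> k1 != k2.
  move=> k1 k2 m1 m2 m1L m2L xm1 xm2 k1m k2m k1y; apply: contra => /eqP e; subst k2.
  by apply/eqP; apply: (lines_eq m1L m2L (ax _ k1y)).
exists a, b, c; split.
  split; [exact: (dif a b l1 l2)|exact: (dif a c l1 l3)|exact: (dif b c l2 l3)].
move=> q; apply/andP/idP.
- case=> qx qy.
  have [l [lL xl ql]] := perp_line qx (ax _ qy).
  have := three_lines h1 h2 h3 lL x1 x2 x3 xl n12 n13 n23.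
  case=> ?; subst l; rewrite !inE.
  + by rewrite (gq_uniq h1 (yl _ x1 h1) ql al qy ay) eqxx.
  + by rewrite (gq_uniq h2 (yl _ x2 h2) ql bl qy by') eqxx orbT.
  + by rewrite (gq_uniq h3 (yl _ x3 h3) ql cl qy cy) eqxx orbT.
- by move=> /set3P[]->; split => //; rewrite perp_sym; [exact: (line_perp h1)|exact: (line_perp h2)|exact: (line_perp h3)].
Qed.

Lemma perp2_sub x y u1 u2 u3 : y \notin perp x -> u1 != u2 -> u1 != u3 -> u2 != u3 ->
  (u1 \in perp x) && (u1 \in perp y) -> (u2 \in perp x) && (u2 \in perp y) ->
  (u3 \in perp x) && (u3 \in perp y) ->
  forall q, q \in perp x -> q \in perp y -> q \in [set u1; u2; u3].
Proof.
move=> yx n12 n13 n23 h1 h2 h3 q qx qy.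
have [a [b [c [[nab nac nbc] hc]]]] := perp2 yx.
have e : [set u1; u2; u3] = [set a; b; c].
  apply/eqP; rewrite eqEcard !card3_set // leqnn andbT.
  by apply/subsetP => k /set3P[]->; rewrite -hc.
by rewrite e -hc qx qy.
Qed.

Lemma pair_noncol x y a b : y \notin perp x -> a != b ->
  a \in perp x -> a \in perp y -> b \in perp x -> b \in perp y -> b \notin perp a.
Proof.
move=> yx ab ax ay bx b_y; apply/negP => ba.
have ba' : b != a by rewrite eq_sym.
have [l [lL al bl]] := perp_line ba ba'.
have xl : x \in l by apply: (perp_col lL al bl ab); rewrite perp_sym.
have yl : y \in l by apply: (perp_col lL al bl ab); rewrite perp_sym.
by move/negP: yx; apply; apply: (line_perp lL).
Qed.

Lemma cover a b c v1 v2 v3 : a != b -> a != c -> b != c ->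
  b \notin perp a -> c \notin perp a -> c \notin perp b ->
  v1 != v2 -> v1 != v3 -> v2 != v3 ->
  (forall v, v \in [set v1; v2; v3] -> [&& v \in perp a, v \in perp b & v \in perp c]) ->
  forall p, exists2 v, v \in [set v1; v2; v3] & p \in perp v.
Proof.
move=> ab ac bc ba ca cb n12 n13 n23 hv p.
have [i1 i2 i3] := set3_in v1 v2 v3.
have hv' : forall v w, v \in [set v1; v2; v3] -> w \in [set a; b; c] -> v \in perp w.
  move=> v w /hv /and3P[va vb vc] /set3P[]->//.
have H : forall w1 w2, w1 \in [set a; b; c] -> w2 \in [set a; b; c] -> w2 \notin perp w1 ->
    forall q, q \in perp w1 -> q \in perp w2 -> q \in [set v1; v2; v3].
  move=> w1 w2 w1i w2i w21; apply: perp2_sub => //; apply/andP; split; apply: hv' => //.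
have [ai bi ci] := set3_in a b c.
have caseA : forall w1 w2, w1 \in [set a; b; c] -> w2 \in [set a; b; c] -> w2 \notin perp w1 ->
    p \in perp w1 -> exists2 v, v \in [set v1; v2; v3] & p \in perp v.
  move=> w1 w2 w1i w2i w21 pw.
  case: (eqVneq p w1) => [->|pnw].
    by exists v1 => //; rewrite perp_sym; apply: hv'.
  have [m [mL wm pm]] := perp_line pw pnw.
  have w2m : w2 \notin m by apply: contra w21 => w2m; apply: (line_perp mL).
  have [q qm qw2] := gq_ex mL w2m.
  exists q; last by apply: (line_perp mL).
  by apply: (H w1 w2) => //; apply: (line_perp mL).
case: (boolP (p \in perp a)) => pa; first exact: (caseA a b).
case: (boolP (p \in perp b)) => pb; first by apply: (caseA b a) => //; rewrite perp_sym.
case: (boolP (p \in perp c)) => pc; first by apply: (caseA c a) => //; rewrite perp_sym.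
have [l1 [l1L pl1]] := point_line p.
have [k1 [k2 [k1p k2p k12 le]]] := line_other l1L pl1.
have ext : forall w, p \notin perp w -> exists q, [/\ q \in l1, q \in perp w & (q == k1) || (q == k2)].
  move=> w pw.
  have wl : w \notin l1 by apply: contra pw => wl; rewrite perp_sym; apply: (line_perp l1L).
  have [q ql qw] := gq_ex l1L wl.
  exists q; split => //; move: (ql); rewrite {1}le => /set3P[] e.
  - by rewrite -e qw in pw.
  - by rewrite e eqxx.
  - by rewrite e eqxx orbT.
have [qa [qal qaa qak]] := ext a pa.
have [qb [qbl qbb qbk]] := ext b pb.
have [qc [qcl qcc qck]] := ext c pc.
have fin : forall q w1 w2, q \in l1 -> w1 \in [set a; b; c] -> w2 \in [set a; b; c] -> w2 \notin perp w1 ->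
   q \in perp w1 -> q \in perp w2 -> exists2 v, v \in [set v1; v2; v3] & p \in perp v.
  move=> q w1 w2 ql w1i w2i w21 q1 q2; exists q; first exact: (H w1 w2).
  by apply: (line_perp l1L).
move: qak qbk qck => /orP[]/eqP ea /orP[]/eqP eb /orP[]/eqP ec; subst qa qb qc.
all: first [ by apply: (fin k1 a b) | by apply: (fin k1 a c) | by apply: (fin k1 b c)
           | by apply: (fin k2 a b) | by apply: (fin k2 a c) | by apply: (fin k2 b c) ].
Qed.

Lemma third_pt w a b c m a1 nb :
  a \in perp w -> b \in perp w -> c \in perp w -> c != w ->
  c \notin perp a -> c \notin perp b ->
  m \in L -> a \in m -> a1 \in m -> a1 != a -> w \notin m -> a1 \notin perp c ->
  nb \in L -> a1 \in nb -> b \in nb ->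
  exists lw cw, [/\ lw \in L, w \in lw, c \in lw & cw \in lw] /\
    [/\ cw != c, cw != w, cw != a1 & cw \in perp a1] /\ cw \notin m /\ cw \notin nb.
Proof.
move=> wa wb wc cw' ca cb mL am a1m a1a wm a1c nbL a1nb bnb.
have a1w : a1 \notin perp w.
  by apply/negP => a1w; move/eqP: a1a; apply; apply: (gq_uniq mL wm a1m am).
have [lw [lwL wl cl]] := perp_line wc cw'.
have cw2 : c != w by [].
have [k [kl kc kw kall]] := line_third lwL cl wl cw2.
have a1l : a1 \notin lw by apply: contra a1w => a1l; rewrite perp_sym; apply: (line_perp lwL).
have [k' k'l k'a1] := gq_ex lwL a1l.
have ka1 : k \in perp a1.
  case: (kall _ k'l) => e; subst k'.
  - by move: k'a1; rewrite perp_sym => h; rewrite h in a1c.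
  - by move: k'a1; rewrite perp_sym => h; rewrite h in a1w.
  - done.
exists lw, k; split => //; split; [|split].
- split => //; apply: contraNneq a1l => <-; done.
- apply/negP => km.
  have kw' : k \in perp w by apply: (line_perp lwL).
  have e := gq_uniq mL wm km am kw' wa; subst k.
  by move/negP: ca; apply; apply: (line_perp lwL).
- apply/negP => knb.
  have bl : b \notin lw by apply: contra cb => bl; apply: (line_perp lwL).
  have wb' : w \in perp b by rewrite perp_sym.
  have kb : k \in perp b by apply: (line_perp nbL).
  have e := gq_uniq lwL bl wl kl wb' kb.
  by rewrite e eqxx in kw.
Qed.

Lemma regular x y : y \notin perp x -> exists a b c z, [/\ a != b, a != c & b != c] /\
  (forall q, (q \in perp x) && (q \in perp y) = (q \in [set a; b; c])) /\
  [&& z \in perp a, z \in perp b & z \in perp c] /\ z \notin perp x /\ z \notin perp y.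
Proof.
move=> yx.
have [a [b [c [[ab ac bc] hc]]]] := perp2 yx.
have [ai bi ci] := set3_in a b c.
have /andP[ax ay] : (a \in perp x) && (a \in perp y) by rewrite hc ai.
have /andP[bx b_y] : (b \in perp x) && (b \in perp y) by rewrite hc bi.
have /andP[cx cy] : (c \in perp x) && (c \in perp y) by rewrite hc ci.
have nab := pair_noncol yx ab ax ay bx b_y.
have nac := pair_noncol yx ac ax ay cx cy.
have nbc := pair_noncol yx bc bx b_y cx cy.
have xy : x \notin perp y by rewrite perp_sym.
have ax' : a != x by apply: contraNneq xy => <-.
have ay' : a != y by apply: contraNneq yx => <-.
have xa : x \in perp a by rewrite perp_sym.
have ya : y \in perp a by rewrite perp_sym.
have xa2 : x != a by rewrite eq_sym.
have ya2 : y != a by rewrite eq_sym.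
have [la [laL al xl]] := perp_line xa xa2.
have [ly [lyL al' yl]] := perp_line ya ya2.
have nly : la != ly.
  by apply: contraNneq yx => e; subst ly; apply: (line_perp laL).
have [m [mL am mla mly]] := lines_two laL lyL al al' nly.
have xm : x \notin m.
  by apply: contra mla => xm; apply/eqP; exact: (lines_eq mL laL ax' am xm al xl).
have ym : y \notin m.
  by apply: contra mly => ym; apply/eqP; exact: (lines_eq mL lyL ay' am ym al' yl).
have bm : b \notin m by apply: contra nab => bm; apply: (line_perp mL).
have [a1 a1m a1b] := gq_ex mL bm.
have a1a : a1 != a by apply: contraNneq nab => e; rewrite perp_sym -e.
have a1x : a1 \notin perp x.
  by apply/negP => h; move/eqP: a1a; apply; apply: (gq_uniq mL xm a1m am).
have a1y : a1 \notin perp y.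
  by apply/negP => h; move/eqP: a1a; apply; apply: (gq_uniq mL ym a1m am).
exists a, b, c, a1; split => //; split => //; split => //.
rewrite a1b (line_perp mL am a1m) /=.
apply/negPn/negP => a1c.
have ba1 : b \in perp a1 by rewrite perp_sym.
have ba1' : b != a1 by apply: contraNneq bm => ->.
have [nb [nbL a1nb bnb]] := perp_line ba1 ba1'.
have mnb : m != nb by apply: contraNneq bm => ->.
have cx' : c != x by apply: contraNneq xy => <-.
have cy' : c != y by apply: contraNneq yx => <-.
have [lxc [c1 [[lxcL xlc clc c1l] [[c1c c1x c1a1 c1p] [c1m c1nb]]]]] :=
  third_pt ax bx cx cx' nac nbc mL am a1m a1a xm a1c nbL a1nb bnb.
have [lyc [c2 [[lycL ylc clc' c2l] [[c2c c2y c2a1 c2p] [c2m c2nb]]]]] :=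
  third_pt ay b_y cy cy' nac nbc mL am a1m a1a ym a1c nbL a1nb bnb.
have [n1 [n1L a1n1 c1n1]] := perp_line c1p c1a1.
have [n2 [n2L a1n2 c2n2]] := perp_line c2p c2a1.
have n1m : m != n1 by apply: contraNneq c1m => ->.
have n1nb : nb != n1 by apply: contraNneq c1nb => ->.
have c2n1 : c2 \in n1.
  case: (three_lines mL nbL n1L n2L a1m a1nb a1n1 a1n2 mnb n1m n1nb) => e; subst n2.
  - by rewrite c2n2 in c2m.
  - by rewrite c2n2 in c2nb.
  - done.
have c21 : c2 \in perp c1 by apply: (line_perp n1L).
have c2lxc : c2 \notin lxc.
  apply/negP => h.
  have : c2 \in [set a; b; c].
    rewrite -hc; apply/andP; split; rewrite perp_sym; [exact: (line_perp lxcL) | exact: (line_perp lycL)].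
  case/set3P => e; subst c2.
  - by move/negP: nac; apply; apply: (line_perp lycL).
  - by move/negP: nbc; apply; apply: (line_perp lycL).
  - by rewrite eqxx in c2c.
have cc2 : c \in perp c2 by apply: (line_perp lycL).
have c1c2 : c1 \in perp c2 by rewrite perp_sym.
have e := gq_uniq lxcL c2lxc clc c1l cc2 c1c2.
by rewrite e eqxx in c1c.
Qed.

Lemma noncol u v : v \notin perp u -> ~~ collinear L u v.
Proof. by move=> h; rewrite /collinear (negbTE h) andbF. Qed.

Lemma set3_perm (T : finType) (a b c : T) : [set a; b; c] = [set b; a; c] /\ [set a; b; c] = [set a; c; b]
  /\ [set a; b; c] = [set c; b; a].
Proof.
by split; [|split]; apply/setP => k; rewrite !inE;
  case: (k == a); case: (k == b); case: (k == c).
Qed.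

Lemma line_set3 l e1 e2 : l \in L -> e1 \in l -> e2 \in l -> e1 != e2 ->
  exists e3, [/\ e2 != e3, e1 != e3 & l = [set e1; e2; e3]].
Proof.
move=> lL h1 h2 e12; have [e3 [e3l e31 e32 hall]] := line_third lL h1 h2 e12.
exists e3; split; try by rewrite eq_sym.
apply/eqP; rewrite eq_sym eqEcard (line_card lL) card3_set // ?leqnn ?andbT.
- by apply/subsetP => k /set3P[]->.
- by rewrite eq_sym.
- by rewrite eq_sym.
Qed.

Lemma coreL e1 e2 d : e1 != e2 -> d \in perp e1 -> d \in perp e2 ->
  exists e3 d2 d3, [/\ e1 != e2, e2 != e3 & e1 != e3] /\
    ([set e1; e2; e3] \in L \/ complete_triad L e1 e2 e3) /\
    [/\ d != d2, d2 != d3 & d != d3] /\ [set d; d2; d3] = perpA L [set e1; e2; e3].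
Proof.
move=> e12 d1 d2.
case: (boolP (e2 \in perp e1)) => h.
- have e21 : e2 != e1 by rewrite eq_sym.
  have [l [lL l1 l2]] := perp_line h e21.
  have dl : d \in l by apply: (perp_col lL l1 l2 e12).
  have [e3 [e23 e13 le]] := line_set3 lL l1 l2 e12.
  have [k2 [k3 [k2d k3d k23 le']]] := line_other lL dl.
  exists e3, k2, k3; split => //; split; first by left; rewrite -le.
  split; first by split => //; rewrite eq_sym.
  by rewrite -le perpA_line.
- have [a [b [c [z [[ab ac bc] [hc [zabc [ze1 ze2]]]]]]]] := regular h.
  have dS : d \in [set a; b; c] by rewrite -hc d1 d2.
  have [k2 [k3 [k2d k3d k23 le']]] := card3P (card3_set ab ac bc) dS.
  have ez1 : e1 != z by apply: contraNneq ze1 => <-; exact: perp_refl.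
  have ez2 : e2 != z by apply: contraNneq ze2 => <-; exact: perp_refl.
  have pe : perpA L [set e1; e2; z] = [set a; b; c].
    apply/setP => q; rewrite perpA3 -hc; case qe1: (q \in perp e1) => //=.
    case qe2: (q \in perp e2) => //=.
    have : q \in [set a; b; c] by rewrite -hc qe1 qe2.
    move: zabc => /and3P[za zb zc].
    by case/set3P => ->; rewrite perp_sym.
  exists z, k2, k3; split => //; split.
    right; rewrite /complete_triad e12 ez2 ez1 !noncol //.
    by rewrite pe card3_set.
  split; first by split => //; rewrite eq_sym.
  by rewrite pe le'.
Qed.

Lemma coreR d1 d2 e : d1 != d2 -> e \in perp d1 -> e \in perp d2 ->
  exists d3 e2 e3, [/\ e != e2, e2 != e3 & e != e3] /\
    ([set e; e2; e3] \in L \/ complete_triad L e e2 e3) /\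
    [/\ d1 != d2, d2 != d3 & d1 != d3] /\ [set d1; d2; d3] = perpA L [set e; e2; e3].
Proof.
move=> d12 ed1 ed2.
case: (boolP (d2 \in perp d1)) => h.
- have d21 : d2 != d1 by rewrite eq_sym.
  have [l [lL l1 l2]] := perp_line h d21.
  have el : e \in l by apply: (perp_col lL l1 l2 d12).
  have [d3 [d23 d13 le]] := line_set3 lL l1 l2 d12.
  have [k2 [k3 [k2e k3e k23 le']]] := line_other lL el.
  exists d3, k2, k3; split; first by split => //; rewrite eq_sym.
  split; first by left; rewrite -le'.
  by split => //; rewrite -le' perpA_line.
- have [a [b [c [z [[ab ac bc] [hc [zabc [zd1 zd2]]]]]]]] := regular h.
  have eS : e \in [set a; b; c] by rewrite -hc ed1 ed2.
  have [k2 [k3 [k2e k3e k23 le']]] := card3P (card3_set ab ac bc) eS.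
  have inS : forall u, u \in [set a; b; c] -> (u \in perp d1) && (u \in perp d2).
    by move=> u; rewrite hc.
  have nc : forall u v, u \in [set a; b; c] -> v \in [set a; b; c] -> u != v -> v \notin perp u.
    move=> u v /inS/andP[u1 u2] /inS/andP[v1 v2] uv.
    exact: (pair_noncol h uv u1 u2 v1 v2).
  have [ai bi ci] := set3_in a b c.
  have zd1' : d1 != z by apply: contraNneq zd1 => <-; exact: perp_refl.
  have zd2' : d2 != z by apply: contraNneq zd2 => <-; exact: perp_refl.
  have dperp : forall u w, u \in [set a; b; c] -> w \in [set d1; d2; z] -> w \in perp u.
    move=> u w uS /set3P[]->.
    + by move: (inS u uS) => /andP[? ?]; rewrite perp_sym.
    + by move: (inS u uS) => /andP[? ?]; rewrite perp_sym.
    + by move: zabc uS => /and3P[? ? ?] /set3P[]->.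
  have [w1 w2 w3] := set3_in d1 d2 z.
  have pe : perpA L [set a; b; c] = [set d1; d2; z].
    apply/setP => q; rewrite perpA3; apply/idP/idP.
    + case/and3P => qa qb _.
      apply: (perp2_sub (x:=a) (y:=b)) => //; first exact: nc.
      * by rewrite !dperp.
      * by rewrite !dperp.
      * by rewrite !dperp.
    + by move=> qS; rewrite !dperp.
  have [ei k2i k3i] := set3_in e k2 k3.
  exists z, k2, k3; split; first by split => //; rewrite eq_sym.
  split.
    right; rewrite /complete_triad !noncol; first last.
    - by apply: nc; rewrite ?le' // eq_sym.
    - by apply: nc; rewrite ?le'.
    - by apply: nc; rewrite ?le' // eq_sym.
    rewrite -le' pe card3_set // eqxx !andbT.
    by rewrite eq_sym k2e k23 eq_sym k3e.
  by split => //; rewrite -le' pe.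
Qed.
End GQ.

Lemma line_cover P (L : {set {set P}}) : is_GQ22 L -> forall l p, l \in L ->
  exists2 v, v \in l & p \in perp L v.
Proof.
move=> HG l p lL; case: (boolP (p \in l)) => pl.
  by exists p => //; exact: perp_refl.
have [v vl vp] := gq_ex HG lL pl; exists v => //; by rewrite perp_sym.
Qed.

Section Iso.
Variables (P P' : finType) (L : {set {set P}}) (L' : {set {set P'}}) (f : P -> P').
Hypothesis Hiso : is_iso L L' f.

Lemma f_inj : injective f.
Proof. by case: Hiso => /bij_inj. Qed.

Lemma f_surj y : exists x, y = f x.
Proof. by case: Hiso => [[g _ gK]] _; exists (g y); rewrite gK. Qed.

Lemma iso_perp x y : (f y \in perp L' (f x)) = (y \in perp L x).
Proof.
rewrite !perpE (inj_eq f_inj); congr (_ || _).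
case: Hiso => [[g fK gK]] hL.
apply/existsP/existsP => -[l /and3P[lL xl yl]].
- exists (g @: l); apply/and3P; split.
  + rewrite hL -imset_comp (eq_imset (g:=id)) ?imset_id //; exact: gK.
  + by apply/imsetP; exists (f x) => //; rewrite fK.
  + by apply/imsetP; exists (f y) => //; rewrite fK.
- exists (f @: l); apply/and3P; split; first by rewrite -hL.
  + exact: imset_f.
  + exact: imset_f.
Qed.

Lemma iso_perpA (A : {set P}) y : (f y \in perpA L' (f @: A)) = (y \in perpA L A).
Proof.
apply/perpAP/perpAP.
- by move=> h a aA; rewrite -iso_perp; apply: h; apply: imset_f.
- by move=> h b /imsetP[a aA ->]; rewrite iso_perp; apply: h.
Qed.

Lemma iso_img3 x y z : f @: [set x; y; z] = [set f x; f y; f z].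
Proof. by rewrite !imsetU !imset_set1. Qed.

Lemma iso_perpA_img (A : {set P}) : perpA L' (f @: A) = f @: perpA L A.
Proof.
apply/setP => e; have [y ->] := f_surj e.
by rewrite iso_perpA mem_imset //; exact: f_inj.
Qed.

Lemma iso_line x y z : ([set f x; f y; f z] \in L') = ([set x; y; z] \in L).
Proof. by case: Hiso => _ hL; rewrite hL iso_img3. Qed.

Lemma iso_col x y : collinear L' (f x) (f y) = collinear L x y.
Proof. by rewrite /collinear (inj_eq f_inj) iso_perp. Qed.

Lemma iso_triad x y z : complete_triad L' (f x) (f y) (f z) = complete_triad L x y z.
Proof.
rewrite /complete_triad !(inj_eq f_inj) !iso_col -iso_img3 iso_perpA_img card_imset //.
exact: f_inj.
Qed.
End Iso.

Lemma pick3 (T : finType) (g : T -> bool) p1 p2 p3 a b c :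
  a \in [set p1; p2; p3] -> b \in [set p1; p2; p3] -> c \in [set p1; p2; p3] ->
  a != b -> c != a -> c != b -> g p1 || g p2 || g p3 -> ~~ g a -> ~~ g b -> g c.
Proof.
move=> /set3P[]-> /set3P[]-> /set3P[]->; rewrite ?eqxx //= => _ _ _;
  by case: (g p1); case: (g p2); case: (g p3).
Qed.

Section Main.
Variables (P P' : finType) (L : {set {set P}}) (L' : {set {set P'}}) (f : P -> P').
Hypotheses (HG : is_GQ22 L) (HG' : is_GQ22 L') (Hiso : is_iso L L' f).

Definition goodb (alpha b : BPt P P') : bool :=
  match alpha, b with
  | inl (inr p), inl (inl (s, t)) => t \in perp L' (f p)
  | inr p', inl (inl (s, t)) => f s \in perp L' p'
  | _, _ => false
  end.

Lemma mk_calL x y z u v w : x != y -> y != z -> x != z ->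
  ([set f x; f y; f z] \in L' \/ complete_triad L' (f x) (f y) (f z)) ->
  u != v -> v != w -> u != w -> [set u; v; w] = perpA L' [set f x; f y; f z] ->
  calL_line L L' f [set pairPt x u; pairPt y v; pairPt z w].
Proof.
move=> xy yz xz hT uv vw uw hU.
have [ui vi wi] := set3_in u v w.
move: (ui) (vi) (wi); rewrite hU !perpA3 => /and3P[u1 _ _] /and3P[_ v2 _] /and3P[_ _ w3].
exists x, y, z, u, v, w; split; first by split.
split; first by case: hT => h; [left; rewrite -(iso_line Hiso) | right; rewrite -(iso_triad Hiso)].
split; first by split.
split; first by rewrite (iso_img3 f).
by split.
Qed.

Lemma short_adj_l x u : inCalP L' f x u -> Badj L L' f (@leftPt P P' x) (pairPt x u).
Proof.
move=> h; split => //; exists [set @leftPt P P' x; pairPt x u; @rightPt P P' u]; split.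
  by right; exists x, u.
by have [? ? ?] := set3_in (@leftPt P P' x) (pairPt x u) (@rightPt P P' u).
Qed.

Lemma short_adj_r x u : inCalP L' f x u -> Badj L L' f (@rightPt P P' u) (pairPt x u).
Proof.
move=> h; split => //; exists [set @leftPt P P' x; pairPt x u; @rightPt P P' u]; split.
  by right; exists x, u.
by have [? ? ?] := set3_in (@leftPt P P' x) (pairPt x u) (@rightPt P P' u).
Qed.

Lemma adj_pair alpha s t : inPuP' alpha -> Badj L L' f alpha (pairPt s t) ->
  alpha = @leftPt P P' s \/ alpha = @rightPt P P' t.
Proof.
move=> ha [_ [Ls0 [[hc|hs] [h1 h2]]]].
- case: hc => [x [y [z [u [v [w [_ [_ [_ [_ [_ e]]]]]]]]]]]; subst Ls0.
  by case/set3P: h1 => e; subst alpha.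
- case: hs => [x0 [u0 [_ e]]]; subst Ls0.
  case/set3P: h2 => // -[-> ->].
  by case/set3P: h1 => e; subst alpha; [left|done|right].
Qed.

Lemma path2 alpha s t : inPuP' alpha -> inCalP L' f s t -> goodb alpha (pairPt s t) ->
  dist_le L L' f 2 alpha (pairPt s t).
Proof.
case: alpha => [[[p0 q0]|p]|p'] //= _ hst hg.
- case: (eqVneq s p) => [->|sp].
    by left; right; exists (@leftPt P P' p); split; [done | exact: short_adj_l hg].
  have fsp : f s != f p by rewrite (inj_eq (f_inj Hiso)).
  have [e3 [d2 [d3 [[_ e23 e13] [hT [[td2 d23 td3] hU]]]]]] := coreL HG' fsp hst hg.
  have [r er] := f_surj Hiso e3; subst e3.
  have pr : p != r by apply: contraNneq e23 => ->.
  have sr : s != r by apply: contraNneq e13 => ->.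
  have hc := mk_calL sp pr sr hT td2 d23 td3 hU.
  have pd2 : inCalP L' f p d2.
    have [_ i2 _] := set3_in t d2 d3.
    by move: i2; rewrite hU perpA3 => /and3P[].
  right; exists (pairPt p d2); split.
    by right; exists (@leftPt P P' p); split; [done | exact: short_adj_l pd2].
  split; first by move=> [e _]; rewrite e eqxx in sp.
  exists [set pairPt s t; pairPt p d2; pairPt r d3]; split; first by left.
  by have [? ? ?] := set3_in (pairPt s t) (pairPt p d2) (pairPt r d3); split.
- case: (eqVneq t p') => [et|tp].
    subst t.
    by left; right; exists (@rightPt P P' p'); split; [done | exact: short_adj_r hst].
  have hs' : f s \in perp L' t by rewrite perp_sym.
  have [d3 [e2 [e3 [[se2 e23 se3] [hT [[_ pd3 td3] hU]]]]]] := coreR HG' tp hs' hg.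
  have [r2 er2] := f_surj Hiso e2; subst e2.
  have [r3 er3] := f_surj Hiso e3; subst e3.
  have s2 : s != r2 by apply: contraNneq se2 => ->.
  have s3 : s != r3 by apply: contraNneq se3 => ->.
  have r23 : r2 != r3 by apply: contraNneq e23 => ->.
  have hc := mk_calL s2 r23 s3 hT tp pd3 td3 hU.
  have rp : inCalP L' f r2 p'.
    have [_ i2 _] := set3_in t p' d3.
    by move: i2; rewrite hU perpA3 => /and3P[].
  right; exists (pairPt r2 p'); split.
    by right; exists (@rightPt P P' p'); split; [done | exact: short_adj_r rp].
  split; first by move=> [_ e]; rewrite e eqxx in tp.
  exists [set pairPt s t; pairPt r2 p'; pairPt r3 d3]; split; first by left.
  by have [? ? ?] := set3_in (pairPt s t) (pairPt r2 p') (pairPt r3 d3); split.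
Qed.
End Main.

Theorem proposition4p8 (P P' : finType) (L : {set {set P}}) (L' : {set {set P'}})
  (f : P -> P') :
  is_GQ22 L -> is_GQ22 L' -> is_iso L L' f ->
  forall (Ls : {set BPt P P'}), calL_line L L' f Ls ->
  forall alpha : BPt P P', inPuP' alpha ->
  forall a b c : BPt P P', a \in Ls -> b \in Ls -> c \in Ls ->
  a != b -> c != a -> c != b ->
  Bdist L L' f alpha a 3 -> Bdist L L' f alpha b 3 ->
  Bdist L L' f alpha c 2.
Proof.
move=> HG HG' Hiso Ls hLs alpha ha a b c aL bL cL ab ca cb [_ na3] [_ nb3].
case: (hLs) => x [y [z [u [v [w [[xy yz xz] [hT [[uv vw uw] [hU [_ eLs]]]]]]]]]].
rewrite (iso_img3 f) in hU; subst Ls.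
have finj := f_inj Hiso.
have fxy : f x != f y by rewrite (inj_eq finj).
have fyz : f y != f z by rewrite (inj_eq finj).
have fxz : f x != f z by rewrite (inj_eq finj).
have allp : forall s0 t0, s0 \in [set x; y; z] -> t0 \in [set u; v; w] -> t0 \in perp L' (f s0).
  by move=> s0 t0 hs; rewrite hU perpA3 => /and3P[h1 h2 h3]; case/set3P: hs => ->.
have inLs : forall bb, bb \in [set pairPt x u; pairPt y v; pairPt z w] ->
    exists s t, [/\ bb = pairPt s t, s \in [set x; y; z] & t \in [set u; v; w]].
  have [x1 y1 z1] := set3_in x y z; have [u1 v1 w1] := set3_in u v w.
  by move=> bb /set3P[]->; [exists x, u | exists y, v | exists z, w].
have notgood : forall bb, bb \in [set pairPt x u; pairPt y v; pairPt z w] ->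
    ~ dist_le L L' f 2 alpha bb -> ~~ goodb L' f alpha bb.
  move=> bb /inLs [s [t [-> hs ht]]] nd; apply/negP => g.
  by apply: nd; apply: path2 => //; apply: allp.
have na : ~~ goodb L' f alpha a by apply: notgood => //; apply: na3.
have nb : ~~ goodb L' f alpha b by apply: notgood => //; apply: nb3.
have some : goodb L' f alpha (pairPt x u) || goodb L' f alpha (pairPt y v)
            || goodb L' f alpha (pairPt z w).
  have tri : complete_triad L x y z -> [/\ f y \notin perp L' (f x), f z \notin perp L' (f x)
       & f z \notin perp L' (f y)].
    rewrite -(iso_triad Hiso) /complete_triad => /and5P[_ _ _ c1 /andP[c2 /andP[c3 _]]].
    by move: c1 c2 c3; rewrite /collinear fxy fyz fxz /=.
  have hv : forall v0, v0 \in [set u; v; w] ->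
      [&& v0 \in perp L' (f x), v0 \in perp L' (f y) & v0 \in perp L' (f z)].
    by move=> v0; rewrite hU perpA3.
  case: alpha ha {na nb notgood na3 nb3} => [[[p0 q0]|p]|p'] //= _.
  - have [v0 v0i pv0] : exists2 v0, v0 \in [set u; v; w] & f p \in perp L' v0.
      case: hT => hT.
      + have l'L : [set f x; f y; f z] \in L' by rewrite (iso_line Hiso).
        by rewrite hU (perpA_line HG' l'L); apply: line_cover.
      + have [n1 n2 n3] := tri hT.
        by apply: (cover HG' fxy fxz fyz n1 n2 n3 uv uw vw hv).
    by move: pv0; rewrite perp_sym; case/set3P: v0i => -> ->; rewrite ?orbT.
  - have [v0 v0i pv0] : exists2 v0, v0 \in [set f x; f y; f z] & p' \in perp L' v0.
      case: hT => hT.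
      + have l'L : [set f x; f y; f z] \in L' by rewrite (iso_line Hiso).
        by apply: line_cover.
      + have [n1 n2 n3] := tri hT.
        have [ui vi wi] := set3_in u v w.
        have [xi yi zi] := set3_in x y z.
        have hp : forall t0, t0 \in [set u; v; w] -> (t0 \in perp L' (f x)) && (t0 \in perp L' (f y)).
          by move=> t0 ti; rewrite !allp.
        have nc : forall t1 t2, t1 \in [set u; v; w] -> t2 \in [set u; v; w] -> t1 != t2 ->
            t2 \notin perp L' t1.
          move=> t1 t2 /hp/andP[h1 h2] /hp/andP[h3 h4] t12.
          exact: (pair_noncol HG' n1 t12 h1 h2 h3 h4).
        apply: (cover HG' uv uw vw (nc _ _ ui vi uv) (nc _ _ ui wi uw) (nc _ _ vi wi vw) fxy fxz fyz).
        move=> v1 /set3P[]-> ; rewrite -!(perp_sym L' (f _)) !allp //.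
    by move: pv0; rewrite perp_sym; case/set3P: v0i => -> ->; rewrite ?orbT.
have gc := pick3 aL bL cL ab ca cb some na nb.
have [s [t [ec hs ht]]] := inLs c cL; subst c.
split; first by apply: path2 => //; apply: allp.
case=> [|[|m]] // _ /=.
- by move=> e; subst alpha.
- case=> [e|[c0 [e hadj]]]; first by subst alpha.
  subst c0.
  have [s' [t' [ea hs' ht']]] := inLs a aL; subst a.
  move/negP: na; apply.
  case: (adj_pair ha hadj) => e; subst alpha => /=.
  + exact: allp.
  + by rewrite perp_sym; apply: allp.
Qed.
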